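(* Let $k\ge0$ and let $(w_1,i_1),(w_2,i_2)$ be marked words over a finite alphabet $A$. Then $(w_1,i_1)\equiv_k(w_2,i_2)$ if and only if Player 2 has a winning strategy in the $k$-round game on $(w_1,i_1)$ and $(w_2,i_2)$.
   Context: A marked word is a pair $(w,i)$ with $w\in A^*$ and $1\le i\le|w|$; $w(j)$ is the $j$-th letter. $FO^2[<,\mathrm{Inv}]$ is two-variable first-order logic with $<$, unary predicates $a(x)$ and binary predicates $a(x,y)$ meaning that some position strictly between $x$ and $y$ carries $a$. $(w_1,i_1)\equiv_k(w_2,i_2)$ means these marked words satisfy exactly the same $FO^2[<,\mathrm{Inv}]$ formulas with one free variable (interpreted at the mark) of quantifier depth at most $k$. The $k$-round game: a single pebble on each word, initially on $i_1$ and $i_2$. In each round, if the pebbles are on $j_1,j_2$, Player 1 chooses one word, say $w_1$, and moves its pebble to a position $j_1'\ne j_1$; Player 2 must move the other pebble to a position $j_2'$ with (i) $j_1<j_1'$ iff $j_2<j_2'$, (ii) $w_1(j_1')=w_2(j_2')$, (iii) the set of letters occurring strictly between $j_1$ and $j_1'$ in $w_1$ equals the set of letters occurring strictly between $j_2$ and $j_2'$ in $w_2$ (symmetrically if Player 1 chooses $w_2$). Player 2 wins the $k$-round game if $w_1(i_1)=w_2(i_2)$ and she makes a legal response in each of the $k$ rounds; otherwise Player 1 wins. *)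

(* Defs.v *)
From mathcomp Require Import all_boot.
Set Implicit Arguments. Unset Strict Implicit. Unset Printing Implicit Defensive.

(* Words over a finite alphabet A are [seq A]; positions are 0-based:
   position j of w (0 <= j < size w) corresponds to position j+1 in the paper. *)

Definition letter (A : finType) (w : seq A) (j : nat) : option A :=
  nth None (map Some w) j.

Definition between (A : finType) (w : seq A) (a : A) (j j' : nat) : Prop :=
  exists m, minn j j' < m < maxn j j' /\ letter w m = Some a.

Inductive var := VX | VY.

Inductive form (A : finType) :=
  | FTrue
  | FLab (a : A) (v : var)
  | FLt (v v' : var)
  | FEq (v v' : var)
  | FBtw (a : A) (v v' : var)
  | FNot (phi : form A)
  | FAnd (phi psi : form A)
  | FEx (v : var) (phi : form A).
Arguments FTrue {A}.

Fixpoint qdepth (A : finType) (phi : form A) : nat :=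
  match phi with
  | FNot p => qdepth p
  | FAnd p q => maxn (qdepth p) (qdepth q)
  | FEx _ p => (qdepth p).+1
  | _ => 0
  end.

Definition var_eqb (u v : var) : bool :=
  match u, v with VX, VX | VY, VY => true | _, _ => false end.

Fixpoint free (A : finType) (v : var) (phi : form A) : bool :=
  match phi with
  | FTrue => false
  | FLab _ u => var_eqb u v
  | FLt u u' | FEq u u' | FBtw _ u u' => var_eqb u v || var_eqb u' v
  | FNot p => free v p
  | FAnd p q => free v p || free v q
  | FEx u p => ~~ var_eqb u v && free v p
  end.

Definition upd (env : var -> nat) (v : var) (j : nat) : var -> nat :=
  fun u => if var_eqb u v then j else env u.

Fixpoint sat (A : finType) (w : seq A) (env : var -> nat) (phi : form A) : Prop :=
  match phi with
  | FTrue => True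
  | FLab a v => letter w (env v) = Some a
  | FLt v v' => env v < env v'
  | FEq v v' => env v = env v'
  | FBtw a v v' => between w a (env v) (env v')
  | FNot p => ~ sat w env p
  | FAnd p q => sat w env p /\ sat w env q
  | FEx v p => exists j, j < size w /\ sat w (upd env v j) p
  end.

Definition fo2_equiv (A : finType) (k : nat) (w1 : seq A) (i1 : nat)
    (w2 : seq A) (i2 : nat) : Prop :=
  forall phi : form A, qdepth phi <= k -> free VY phi = false ->
    (sat w1 (fun _ => i1) phi <-> sat w2 (fun _ => i2) phi).

Definition legal (A : finType) (u : seq A) (j j' : nat) (v : seq A) (m m' : nat) : Prop :=
  [/\ m' < size v, m' <> m, (j < j') = (m < m'), letter u j' = letter v m'
    & forall a, between u a j j' <-> between v a m m'].

Fixpoint p2wins (A : finType) (k : nat) (w1 : seq A) (j1 : nat) (w2 : seq A) (j2 : nat)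
    : Prop :=
  letter w1 j1 = letter w2 j2 /\
  match k with
  | 0 => True
  | k'.+1 =>
      (forall j1', j1' < size w1 -> j1' <> j1 ->
         exists j2', legal w1 j1 j1' w2 j2 j2' /\ p2wins k' w1 j1' w2 j2') /\
      (forall j2', j2' < size w2 -> j2' <> j2 ->
         exists j1', legal w2 j2 j2' w1 j1 j1' /\ p2wins k' w1 j1' w2 j2')
  end.

(* Main.v *)
From Stdlib Require Import Classical.
Require Import Defs.
From mathcomp Require Import all_boot.

Set Implicit Arguments. Unset Strict Implicit. Unset Printing Implicit Defensive.

Lemma var_eqbb v : var_eqb v v. Proof. by case: v. Qed.
Lemma var_eqb_sym u v : var_eqb u v = var_eqb v u. Proof. by case: u; case: v. Qed.

Definition swv v := match v with VX => VY | VY => VX end.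

Fixpoint swapf (A : finType) (phi : form A) : form A :=
  match phi with
  | FTrue => @FTrue A
  | FLab a v => FLab a (swv v)
  | FLt v v' => @FLt A (swv v) (swv v')
  | FEq v v' => @FEq A (swv v) (swv v')
  | FBtw a v v' => FBtw a (swv v) (swv v')
  | FNot p => FNot (swapf p)
  | FAnd p q => FAnd (swapf p) (swapf q)
  | FEx v p => FEx (swv v) (swapf p)
  end.

Lemma qdepth_swap (A : finType) (phi : form A) : qdepth (swapf phi) = qdepth phi.
Proof. elim: phi => //= [p IHp q IHq|v p IH]; by rewrite ?IH ?IHp ?IHq. Qed.

Lemma sat_ext (A : finType) (w : seq A) (phi : form A) : forall e1 e2,
  (forall v, free v phi -> e1 v = e2 v) -> (sat w e1 phi <-> sat w e2 phi).
Proof.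
elim: phi => [|a v|v v'|v v'|a v v'|p IH|p IHp q IHq|v p IH] e1 e2 /= he.
- by [].
- by rewrite he ?var_eqbb.
- have h1 : e1 v = e2 v by apply: he; rewrite var_eqbb.
  have h2 : e1 v' = e2 v' by apply: he; rewrite var_eqbb orbT.
  by rewrite h1 h2.
- have h1 : e1 v = e2 v by apply: he; rewrite var_eqbb.
  have h2 : e1 v' = e2 v' by apply: he; rewrite var_eqbb orbT.
  by rewrite h1 h2.
- have h1 : e1 v = e2 v by apply: he; rewrite var_eqbb.
  have h2 : e1 v' = e2 v' by apply: he; rewrite var_eqbb orbT.
  by rewrite h1 h2.
- have := IH e1 e2 he; tauto.
- have h1 : sat w e1 p <-> sat w e2 p by apply: IHp => u hu; apply: he; rewrite hu.
  have h2 : sat w e1 q <-> sat w e2 q by apply: IHq => u hu; apply: he; rewrite hu orbT.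
  tauto.
- have key : forall j, sat w (upd e1 v j) p <-> sat w (upd e2 v j) p.
    move=> j; apply: IH => u hu; rewrite /upd; case E: (var_eqb u v) => //.
    by apply: he; rewrite var_eqb_sym E hu.
  by split; case=> j [sj hs]; exists j; split=> //; apply/(key j).
Qed.

Lemma sat_swap (A : finType) (w : seq A) (phi : form A) : forall e,
  sat w e (swapf phi) <-> sat w (fun u => e (swv u)) phi.
Proof.
elim: phi => [|a v|v v'|v v'|a v v'|p IH|p IHp q IHq|v p IH] e /=; try tauto.
- have := IH e; tauto.
- have := IHp e; have := IHq e; tauto.
- have key : forall j, sat w (upd e (swv v) j) (swapf p) <->
                        sat w (upd (fun u => e (swv u)) v j) p.
    move=> j; apply: (iff_trans (IH _)); apply: sat_ext => u _.
    by rewrite /upd; case: u; case: v.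
  by split; case=> j [sj hs]; exists j; split=> //; apply/(key j).
Qed.

Definition agree (A : finType) (w1 : seq A) x1 y1 (w2 : seq A) x2 y2 :=
  [/\ (x1 < y1) = (x2 < y2), (y1 < x1) = (y2 < x2)
    & forall a, between w1 a x1 y1 <-> between w2 a x2 y2].

Lemma between_sym (A : finType) (w : seq A) a j j' :
  between w a j j' <-> between w a j' j.
Proof. by rewrite /between minnC maxnC. Qed.

Lemma between_refl (A : finType) (w : seq A) a j : ~ between w a j j.
Proof.
move=> [m []]; rewrite minnn maxnn => /andP[h1 h2] _.
by have := ltn_trans h1 h2; rewrite ltnn.
Qed.

Lemma agree_sym_pos (A : finType) (w1 w2 : seq A) x1 y1 x2 y2 :
  agree w1 x1 y1 w2 x2 y2 -> agree w1 y1 x1 w2 y2 x2.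
Proof.
case=> h1 h2 h3; split=> // a; split.
- by move/between_sym/(h3 a)/between_sym.
- by move/between_sym/(h3 a)/between_sym.
Qed.

Lemma agree_comm (A : finType) (w1 w2 : seq A) x1 y1 x2 y2 :
  agree w1 x1 y1 w2 x2 y2 -> agree w2 x2 y2 w1 x1 y1.
Proof. case=> h1 h2 h3; split=> // a; have := h3 a; tauto. Qed.

Lemma agree_refl (A : finType) (w1 w2 : seq A) j m : agree w1 j j w2 m m.
Proof. split; rewrite ?ltnn // => a; split=> /between_refl []. Qed.

Lemma agree_eq (A : finType) (w1 w2 : seq A) x1 y1 x2 y2 :
  agree w1 x1 y1 w2 x2 y2 -> (x1 = y1 <-> x2 = y2).
Proof.
case=> h1 h2 _.
have E : (x1 == y1) = (x2 == y2).
  by rewrite eqn_leq (leqNgt x1) (leqNgt y1) eqn_leq (leqNgt x2) (leqNgt y2) h1 h2.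
by split=> /eqP; [rewrite E | rewrite -E] => /eqP.
Qed.

Lemma legal_agree (A : finType) (u v : seq A) j j' m m' :
  legal u j j' v m m' -> j' <> j -> agree u j j' v m m'.
Proof.
case=> _ nm ho _ hb nj; split=> //.
rewrite (ltn_neqAle j') (ltn_neqAle m') (leqNgt j') (leqNgt m') ho.
have -> : (j' != j) by apply/eqP.
by have -> : (m' != m) by apply/eqP.
Qed.

Lemma p2_letter (A : finType) k (w1 w2 : seq A) j1 j2 :
  p2wins k w1 j1 w2 j2 -> letter w1 j1 = letter w2 j2.
Proof. by case: k => [|k] []. Qed.

Lemma p2_mono (A : finType) (w1 w2 : seq A) k : forall j1 j2,
  p2wins k.+1 w1 j1 w2 j2 -> p2wins k w1 j1 w2 j2.
Proof.
elim: k => [|k IH] j1 j2 /=.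
- by case=> h _.
- case=> hl [hf hb]; split=> //; split.
  + move=> j1' s n; case: (hf j1' s n) => j2' [hlg hp]; exists j2'; split=> //; exact: IH.
  + move=> j2' s n; case: (hb j2' s n) => j1' [hlg hp]; exists j1'; split=> //; exact: IH.
Qed.

Lemma p2_sym (A : finType) k : forall (w1 w2 : seq A) j1 j2,
  p2wins k w1 j1 w2 j2 -> p2wins k w2 j2 w1 j1.
Proof.
elim: k => [|k IH] w1 w2 j1 j2 /=.
- by case=> h _.
- case=> hl [hf hb]; split=> //; split.
  + move=> j2' s n; case: (hb j2' s n) => j1' [hlg hp]; exists j1'; split=> //; exact: IH.
  + move=> j1' s n; case: (hf j1' s n) => j2' [hlg hp]; exists j2'; split=> //; exact: IH.
Qed.

Lemma p2_step (A : finType) k (w1 w2 : seq A) a1 a2 j1 :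
  p2wins k.+1 w1 a1 w2 a2 -> a2 < size w2 -> j1 < size w1 ->
  exists j2, j2 < size w2 /\ p2wins k w1 j1 w2 j2 /\ agree w1 a1 j1 w2 a2 j2.
Proof.
move=> H sa s; case: (eqVneq j1 a1) => [->|ne].
- exists a2; split=> //; split; [exact: p2_mono | exact: agree_refl].
- have ne' : j1 <> a1 by apply/eqP.
  case: H => _ [hf _]; case: (hf j1 s ne') => j2 [hl hp].
  exists j2; split; first by case: hl.
  split=> //; exact: legal_agree.
Qed.

Lemma p2_step_back (A : finType) k (w1 w2 : seq A) a1 a2 j2 :
  p2wins k.+1 w1 a1 w2 a2 -> a1 < size w1 -> j2 < size w2 ->
  exists j1, j1 < size w1 /\ p2wins k w1 j1 w2 j2 /\ agree w1 a1 j1 w2 a2 j2.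
Proof.
move=> H sa s; have [j1 [s1 [hp ha]]] := p2_step (p2_sym H) sa s.
exists j1; split=> //; split; [exact: p2_sym | exact: agree_comm].
Qed.

Lemma upd_cond (A : finType) k (w1 w2 : seq A) e1 e2 v j1 j2 :
  (forall u, e1 u < size w1) -> (forall u, e2 u < size w2) ->
  (forall u, p2wins k.+1 w1 (e1 u) w2 (e2 u)) ->
  j1 < size w1 -> j2 < size w2 -> p2wins k w1 j1 w2 j2 ->
  agree w1 (e1 (swv v)) j1 w2 (e2 (swv v)) j2 ->
  [/\ forall u, upd e1 v j1 u < size w1, forall u, upd e2 v j2 u < size w2,
      forall u, p2wins k w1 (upd e1 v j1 u) w2 (upd e2 v j2 u)
    & agree w1 (upd e1 v j1 VX) (upd e1 v j1 VY) w2 (upd e2 v j2 VX) (upd e2 v j2 VY)].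
Proof.
move=> s1 s2 hp sj1 sj2 hp2 ag.
case: v ag => /= ag; rewrite /upd /=; split=> //; try exact: agree_sym_pos;
  case => //=; exact: p2_mono.
Qed.

Lemma game_sound (A : finType) (w1 w2 : seq A) (phi : form A) : forall k e1 e2,
  qdepth phi <= k -> (forall v, e1 v < size w1) -> (forall v, e2 v < size w2) ->
  (forall v, p2wins k w1 (e1 v) w2 (e2 v)) ->
  agree w1 (e1 VX) (e1 VY) w2 (e2 VX) (e2 VY) ->
  (sat w1 e1 phi <-> sat w2 e2 phi).
Proof.
elim: phi => [|a v|v v'|v v'|a v v'|p IH|p IHp q IHq|v p IH] k e1 e2 /= hd s1 s2 hp ag.
- by [].
- by rewrite (p2_letter (hp v)).
- case: ag => o1 o2 _; case: v; case: v' => /=; rewrite ?ltnn ?o1 ?o2; by split.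
- have E1 := agree_eq ag; have E2 := agree_eq (agree_sym_pos ag).
  case: v; case: v' => //=; by split.
- case: ag => _ _ hb; case: v; case: v' => /=;
    try (by split=> /between_refl []); try exact: hb.
  split; by move/between_sym/(hb a)/between_sym.
- have := IH k e1 e2 hd s1 s2 hp ag; tauto.
- move: hd; rewrite geq_max => /andP[h1 h2].
  have := IHp k e1 e2 h1 s1 s2 hp ag; have := IHq k e1 e2 h2 s1 s2 hp ag; tauto.
- case: k hd hp => [|k]; first by rewrite ltn0.
  rewrite ltnS => hd hp; split.
  + case=> j1 [sj hs].
    have [j2 [sj2 [hp2 ag2]]] := p2_step (hp (swv v)) (s2 (swv v)) sj.
    have [c1 c2 c3 c4] := upd_cond s1 s2 hp sj sj2 hp2 ag2.
    exists j2; split=> //; exact/(IH k _ _ hd c1 c2 c3 c4).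
  + case=> j2 [sj2 hs].
    have [j1 [sj [hp2 ag2]]] := p2_step_back (hp (swv v)) (s1 (swv v)) sj2.
    have [c1 c2 c3 c4] := upd_cond s1 s2 hp sj sj2 hp2 ag2.
    exists j1; split=> //; exact/(IH k _ _ hd c1 c2 c3 c4).
Qed.

Lemma letter_some (A : finType) (w : seq A) j : j < size w -> exists a, letter w j = Some a.
Proof.
elim: w j => [|x w IH] [|j] //=; first by exists x.
move=> h; exact: IH.
Qed.

Lemma btw_formula (A : finType) (w1 w2 : seq A) (e1 : var -> nat) (s : seq A) :
  exists B : form A, qdepth B = 0 /\ sat w1 e1 B /\ forall e2, sat w2 e2 B ->
    forall a, a \in s -> (between w1 a (e1 VX) (e1 VY) <-> between w2 a (e2 VX) (e2 VY)).
Proof.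
elim: s => [|a s [B [dB [tB nB]]]].
- by exists FTrue; split=> //; split=> // e2 _ a; rewrite in_nil.
- case: (classic (between w1 a (e1 VX) (e1 VY))) => hb.
  + exists (FAnd (FBtw a VX VY) B); rewrite /= dB; split=> //; split=> // e2 [h1 h2] a'.
    rewrite inE => /orP[/eqP -> | ha]; [by split | exact: nB].
  + exists (FAnd (FNot (FBtw a VX VY)) B); rewrite /= dB; split=> //; split=> // e2 [h1 h2] a'.
    rewrite inE => /orP[/eqP -> | ha]; last exact: nB.
    by split=> h; [case: (hb h) | case: (h1 h)].
Qed.

Lemma forth (A : finType) k (w1 w2 : seq A) i1 i2 j1 :
  (forall j1 j2, j1 < size w1 -> j2 < size w2 -> fo2_equiv k w1 j1 w2 j2 -> p2wins k w1 j1 w2 j2) ->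
  fo2_equiv k.+1 w1 i1 w2 i2 -> j1 < size w1 -> j1 <> i1 ->
  exists j2, legal w1 i1 j1 w2 i2 j2 /\ p2wins k w1 j1 w2 j2.
Proof.
move=> IHk heq sj nj; apply: NNPP => Hno.
have [phi [d1 [f1 [t1 n1]]]] : exists phi : form A, qdepth phi <= k /\ free VY phi = false /\
    sat w1 (fun _ => j1) phi /\ forall j2, j2 \in iota 0 (size w2) ->
      legal w1 i1 j1 w2 i2 j2 -> ~ sat w2 (fun _ => j2) phi.
{ elim: (iota 0 (size w2)) => [|j s [phi [d1 [f1 [t1 n1]]]]].
  - by exists FTrue.
  - case: (classic (legal w1 i1 j1 w2 i2 j)) => hl; last first.
    + exists phi; split=> //; split=> //; split=> // j2.
      rewrite inE => /orP[/eqP -> hl' | hj]; [by case: (hl hl') | exact: n1].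
    + have sj2 : j < size w2 by case: hl.
      have np : ~ p2wins k w1 j1 w2 j by move=> hp; apply: Hno; exists j.
      have nf : ~ fo2_equiv k w1 j1 w2 j by move=> hf; apply/np/IHk.
      have [psi [dp [fp hd]]] : exists psi : form A, qdepth psi <= k /\ free VY psi = false /\
          ~ (sat w1 (fun _ => j1) psi <-> sat w2 (fun _ => j) psi).
      { apply: NNPP => hn; apply: nf => psi dp fp; apply: NNPP => hne; apply: hn.
        by exists psi. }
      case: (classic (sat w1 (fun _ => j1) psi)) => hs.
      * exists (FAnd psi phi); rewrite /= geq_max dp d1 fp f1; split=> //; split=> //; split=> // j2.
        rewrite inE => /orP[/eqP -> _ [h _] | hj hl2 [_ h]]; [apply: hd; tauto | exact: n1 hj hl2 h].
      * exists (FAnd (FNot psi) phi); rewrite /= geq_max dp d1 fp f1; split=> //; split=> //; split=> // j2.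
        rewrite inE => /orP[/eqP -> _ [h _] | hj hl2 [_ h]]; [apply: hd; tauto | exact: n1 hj hl2 h]. }
have [b hb] := letter_some sj.
have [B [dB [tB nB]]] := btw_formula w1 w2 (upd (fun _ => i1) VY j1) (enum A).
pose D := FAnd (FNot (@FEq A VX VY)) (FAnd (if i1 < j1 then @FLt A VX VY else FNot (@FLt A VX VY))
            (FAnd (FLab b VY) B)).
have dD : qdepth D = 0 by rewrite /D /=; case: (i1 < j1); rewrite /= dB.
have hsat : sat w2 (fun _ => i2) (FEx VY (FAnd D (swapf phi))).
{ apply/(heq (FEx VY (FAnd D (swapf phi)))) => //.
  - change ((maxn (qdepth D) (qdepth (swapf phi))).+1 <= k.+1).
    by rewrite dD qdepth_swap max0n.
  - exists j1; split=> //; split.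
    + rewrite /D /=; split; first by rewrite /upd /= => e; apply: nj.
      split; last by split.
      rewrite /upd /=; case: ifP => //= ->; done.
    + apply/sat_swap; apply: ((sat_ext w1 _).2 t1).
      case; rewrite /= ?f1 // => _; by rewrite /upd. }
case: hsat => j2 [sj2 [[hne [ho [hl hB]]] hs]].
apply: (n1 j2); first by rewrite mem_iota add0n sj2.
- split=> //.
  + by move=> e; apply: hne; rewrite /upd /= e.
  + move: ho; rewrite /upd /=; case: (i1 < j1) => /= ho; first by rewrite ho.
    by apply/esym/negbTE/negP.
  + by rewrite hb -hl.
  + move=> a; exact: nB hB a (mem_enum _ a).
- apply: ((sat_ext w2 _).1 ((sat_swap _ _ _).1 hs)).
  case; rewrite /= ?f1 // => _; by rewrite /upd.
Qed.

Lemma complete (A : finType) k : forall (w1 w2 : seq A) i1 i2,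
  i1 < size w1 -> i2 < size w2 -> fo2_equiv k w1 i1 w2 i2 -> p2wins k w1 i1 w2 i2.
Proof.
elim: k => [|k IH] w1 w2 i1 i2 s1 s2 he.
- split=> //. have [a ha] := letter_some s1.
  by rewrite ha; symmetry; exact: (he (FLab a VX) (leq0n _) erefl).1 ha.
- split.
  + have [a ha] := letter_some s1.
    by rewrite ha; symmetry; exact: (he (FLab a VX) (leq0n _) erefl).1 ha.
  split.
  + move=> j1 sj nj; exact: (forth (fun a b => IH w1 w2 a b) he sj nj).
  + move=> j2 sj nj.
    have heq' : fo2_equiv k.+1 w2 i2 w1 i1 by move=> phi d f; have := he phi d f; tauto.
    have [j1 [hl1 hp]] := forth (fun a b => IH w2 w1 a b) heq' sj nj.
    exists j1; split=> //; exact: p2_sym.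
Qed.

Theorem theorem9 (A : finType) (k : nat) (w1 w2 : seq A) (i1 i2 : nat) :
  i1 < size w1 -> i2 < size w2 ->
  (fo2_equiv k w1 i1 w2 i2 <-> p2wins k w1 i1 w2 i2).
Proof.
move=> s1 s2; split; first exact: complete.
move=> hp phi d f.
exact: (@game_sound A w1 w2 phi k (fun _ => i1) (fun _ => i2) d
          (fun _ => s1) (fun _ => s2) (fun _ => hp) (agree_refl _ _ _ _)).
Qed.
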